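(* Let $A\in\mathbb{R}^{m\times d}$ have the phase retrieval property in $\mathbb{R}^d$ and let $\Omega\subset U_A$ be a convex domain. Then there exists a constant $\alpha>0$ depending only on $A$ such that $\alpha\cdot\mathrm{dist}(\Phi_A(b),\Phi_A(b'))\le\|b-b'\|$ for all $b,b'\in\Omega$.
   Context: $\|\cdot\|$ is the Euclidean norm, $|Ax|$ the entrywise absolute value. $A$ has the phase retrieval property in $\mathbb{R}^d$ if $|Ax|=|Ay|$ implies $x=\pm y$. $\Phi_A(b):=\operatorname{argmin}_{x\in\mathbb{R}^d}\|\,|Ax|-b\,\|^2$. $\mathcal{K}_A:=\{|Ax|:x\in\mathbb{R}^d\}$; $U_A$ is the set of $b\in\mathbb{R}^m$ having exactly one nearest point in $\mathcal{K}_A$. $\mathrm{dist}(\Phi_A(b),\Phi_A(b')):=\min\{\|x-cy\|: x\in\Phi_A(b),\,y\in\Phi_A(b'),\,c\in\{1,-1\}\}$. *)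

(* Defs.v *)
From HB Require Import structures.
From mathcomp Require Import all_boot all_order all_algebra.
From mathcomp Require Import boolp classical_sets reals.
Set Implicit Arguments. Unset Strict Implicit. Unset Printing Implicit Defensive.
Import Order.TTheory GRing.Theory Num.Theory.
Local Open Scope ring_scope.
Local Open Scope classical_set_scope.

Section PR.
Variable R : realType.

Definition enorm n (v : 'cV[R]_n) : R := Num.sqrt (\sum_(i < n) (v i 0) ^+ 2).

Definition absv n (v : 'cV[R]_n) : 'cV[R]_n := \col_i `|v i 0|.

Definition phase_retrieval m d (A : 'M[R]_(m, d)) : Prop :=
  forall x y : 'cV[R]_d, absv (A *m x) = absv (A *m y) -> x = y \/ x = - y.

Definition PhiA m d (A : 'M[R]_(m, d)) (b : 'cV[R]_m) : set 'cV[R]_d :=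
  [set x | forall z : 'cV[R]_d,
     enorm (absv (A *m x) - b) ^+ 2 <= enorm (absv (A *m z) - b) ^+ 2].

Definition KA m d (A : 'M[R]_(m, d)) : set 'cV[R]_m :=
  [set v | exists x : 'cV[R]_d, v = absv (A *m x)].

Definition nearest m (K : set 'cV[R]_m) (b p : 'cV[R]_m) : Prop :=
  K p /\ forall q, K q -> enorm (b - p) <= enorm (b - q).

Definition UA m d (A : 'M[R]_(m, d)) : set 'cV[R]_m :=
  [set b | exists p, nearest (KA A) b p /\ forall p', nearest (KA A) b p' -> p' = p].

(* dist(Phi_A(b), Phi_A(b')) = min { ||x - c y|| : x in Phi_A(b), y in Phi_A(b'), c = +-1 }
   (rendered as the infimum of that set) *)
Definition distPhi m d (A : 'M[R]_(m, d)) (b b' : 'cV[R]_m) : R :=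
  inf [set r | exists (x y : 'cV[R]_d) (c : R),
         [/\ PhiA A b x, PhiA A b' y, (c = 1 \/ c = -1) & r = enorm (x - c *: y)]].

Definition convex_set m (O : set 'cV[R]_m) : Prop :=
  forall u v (t : R), O u -> O v -> 0 <= t <= 1 -> O (t *: u + (1 - t) *: v).

Definition open_set m (O : set 'cV[R]_m) : Prop :=
  forall b, O b -> exists2 e : R, 0 < e & forall b', enorm (b' - b) < e -> O b'.

(* convex domain: nonempty, open, convex (hence connected) *)
Definition convex_domain m (O : set 'cV[R]_m) : Prop :=
  [/\ O !=set0, open_set O & convex_set O].

End PR.

(* Main.v *)
Require Import Defs.
From HB Require Import structures.
From mathcomp Require Import all_boot all_order all_algebra.
From mathcomp Require Import boolp classical_sets reals.
From mathcomp Require Import functions topology normedtype derive.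
From mathcomp.algebra_tactics Require Import ring lra.
Set Implicit Arguments. Unset Strict Implicit. Unset Printing Implicit Defensive.
Import Order.TTheory GRing.Theory Num.Theory.
Local Open Scope ring_scope.
Local Open Scope classical_set_scope.
Import numFieldNormedType.Exports.

Section Eucl.
Variable R : realType.

Definition dot n (u v : 'cV[R]_n) : R := \sum_(i < n) u i 0 * v i 0.

Lemma dotC n (u v : 'cV[R]_n) : dot u v = dot v u.
Proof. by apply: eq_bigr => i _; rewrite mulrC. Qed.

Lemma dotDl n (u v w : 'cV[R]_n) : dot (u + v) w = dot u w + dot v w.
Proof. by rewrite /dot -big_split; apply: eq_bigr => i _; rewrite !mxE mulrDl. Qed.

Lemma dotZl n (c : R) (u w : 'cV[R]_n) : dot (c *: u) w = c * dot u w.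
Proof. by rewrite /dot mulr_sumr; apply: eq_bigr => i _; rewrite !mxE mulrA. Qed.

Lemma dotNl n (u w : 'cV[R]_n) : dot (- u) w = - dot u w.
Proof. by rewrite -scaleN1r dotZl mulN1r. Qed.

Lemma dotBl n (u v w : 'cV[R]_n) : dot (u - v) w = dot u w - dot v w.
Proof. by rewrite dotDl dotNl. Qed.

Lemma dotDr n (u v w : 'cV[R]_n) : dot w (u + v) = dot w u + dot w v.
Proof. by rewrite dotC dotDl !(dotC w). Qed.
Lemma dotBr n (u v w : 'cV[R]_n) : dot w (u - v) = dot w u - dot w v.
Proof. by rewrite dotC dotBl !(dotC w). Qed.
Lemma dotZr n (c : R) (u w : 'cV[R]_n) : dot w (c *: u) = c * dot w u.
Proof. by rewrite dotC dotZl dotC. Qed.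

Lemma dot_ge0 n (u : 'cV[R]_n) : 0 <= dot u u.
Proof. by apply: sumr_ge0 => i _; rewrite -expr2 sqr_ge0. Qed.

Lemma dot_eq0 n (u : 'cV[R]_n) : dot u u = 0 -> u = 0.
Proof.
move=> /eqP; rewrite psumr_eq0; last by move=> i _; rewrite -expr2 sqr_ge0.
move=> /allP H; apply/matrixP => i j; rewrite (ord1 j) mxE.
by have := H i (mem_index_enum _); rewrite -expr2 sqrf_eq0 => /eqP.
Qed.

Lemma enormE n (u : 'cV[R]_n) : enorm u = Num.sqrt (dot u u).
Proof. by rewrite /enorm /dot; congr Num.sqrt; apply: eq_bigr => i _; rewrite expr2. Qed.

Lemma enorm_ge0 n (u : 'cV[R]_n) : 0 <= enorm u.
Proof. by rewrite /enorm sqrtr_ge0. Qed.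

Lemma enorm2 n (u : 'cV[R]_n) : enorm u ^+ 2 = dot u u.
Proof. by rewrite enormE sqr_sqrtr // dot_ge0. Qed.

Lemma CS2 n (u v : 'cV[R]_n) : dot u v ^+ 2 <= dot u u * dot v v.
Proof.
have [v0|] := eqVneq (dot v v) 0.
  have -> := dot_eq0 v0.
  have -> : dot u 0 = 0 by rewrite /dot big1 // => i _; rewrite mxE mulr0.
  by rewrite expr0n /= mulr_ge0 ?dot_ge0.
move=> vn; have a0 : 0 < dot v v by rewrite lt_neqAle eq_sym vn dot_ge0.
have := dot_ge0 (dot v v *: u - dot u v *: v).
rewrite !(dotBl, dotBr, dotZl, dotZr) (dotC v u) => H.
have : 0 <= dot v v * (dot u u * dot v v - dot u v ^+ 2) by lra.
by rewrite pmulr_rge0 // subr_ge0.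
Qed.

Lemma CS n (u v : 'cV[R]_n) : dot u v <= enorm u * enorm v.
Proof.
rewrite !enormE -sqrtrM ?dot_ge0 //.
apply: le_trans (ler_norm _) _.
by rewrite -sqrtr_sqr ler_sqrt ?mulr_ge0 ?dot_ge0 // CS2.
Qed.

Lemma enorm_triangle n (u v : 'cV[R]_n) : enorm (u + v) <= enorm u + enorm v.
Proof.
rewrite -(@ler_pXn2r _ 2) // ?nnegrE ?addr_ge0 ?enorm_ge0 //.
rewrite enorm2 dotDl !dotDr (dotC v u) sqrrD !enorm2.
have := CS u v; lra.
Qed.

Lemma enormN n (u : 'cV[R]_n) : enorm (- u) = enorm u.
Proof. by rewrite !enormE dotNl dotC dotNl opprK. Qed.

Lemma enormB n (u v : 'cV[R]_n) : enorm (u - v) = enorm (v - u).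
Proof. by rewrite -enormN opprB. Qed.

Lemma enormZ n (c : R) (u : 'cV[R]_n) : enorm (c *: u) = `|c| * enorm u.
Proof. by rewrite !enormE dotZl dotZr mulrA sqrtrM ?sqrtr_sqr // -expr2 sqr_ge0. Qed.

Lemma enorm0 n : enorm (0 : 'cV[R]_n) = 0.
Proof. by rewrite enormE /dot big1 ?sqrtr0 // => i _; rewrite mxE mul0r. Qed.

Lemma enorm_le_sq n (u v : 'cV[R]_n) : enorm u ^+ 2 <= enorm v ^+ 2 -> enorm u <= enorm v.
Proof. by rewrite ler_pXn2r // nnegrE enorm_ge0. Qed.


Definition frob k n (M : 'M[R]_(k, n)) : R := Num.sqrt (\sum_i \sum_j M i j ^+ 2).

Lemma enorm_mul k n (M : 'M[R]_(k, n)) (w : 'cV[R]_n) :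
  enorm (M *m w) <= frob M * enorm w.
Proof.
rewrite -(@ler_pXn2r _ 2) // ?nnegrE ?mulr_ge0 ?enorm_ge0 ?sqrtr_ge0 //.
rewrite exprMn enorm2 /frob sqr_sqrtr; last by do 2 (apply: sumr_ge0 => ? _); rewrite sqr_ge0.
rewrite enorm2 /dot mulr_suml; apply: ler_sum => i _.
pose r : 'cV[R]_n := \col_j M i j.
have -> : (M *m w) i 0 = dot r w by rewrite mxE; apply: eq_bigr => j _; rewrite mxE.
rewrite -expr2; apply: le_trans (CS2 _ _) _.
by rewrite /dot; apply: ler_wpM2r; [exact: dot_ge0|]; rewrite le_eqVlt; apply/orP; left; apply/eqP;
  apply: eq_bigr => j _; rewrite mxE expr2.
Qed.

Lemma inj_lbound k n (B : 'M[R]_(k, n)) : (forall z : 'cV[R]_n, B *m z = 0 -> z = 0) ->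
  exists2 c, 0 <= c & forall z : 'cV[R]_n, enorm z <= c * enorm (B *m z).
Proof.
move=> Binj.
have : row_free B^T.
  apply: inj_row_free => v vB; apply: trmx_inj.
  rewrite (trmx0 _ 1 n); apply: Binj.
  by rewrite -[B]trmxK -trmx_mul vB trmx0.
case/row_freeP => M HM.
exists (frob M^T); first exact: sqrtr_ge0.
move=> z; have {1}-> : z = M^T *m (B *m z).
  by rewrite mulmxA -[B]trmxK -trmx_mul HM trmx1 mul1mx.
exact: enorm_mul.
Qed.

End Eucl.


Section PR2.
Variables (R : realType) (m d : nat) (A : 'M[R]_(m, d)).

Lemma enorm2s n (v : 'cV[R]_n) : enorm v ^+ 2 = \sum_i v i 0 ^+ 2.
Proof. by rewrite /enorm sqr_sqrtr // sumr_ge0 // => i _; rewrite sqr_ge0. Qed.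

Definition sel (S : {ffun 'I_m -> bool}) : 'M[R]_(m, d) := \matrix_(i, j) ((S i)%:R * A i j).

Lemma selE S (z : 'cV[R]_d) i : (sel S *m z) i 0 = (S i)%:R * (A *m z) i 0.
Proof. by rewrite !mxE mulr_sumr; apply: eq_bigr => j _; rewrite mxE mulrA. Qed.

Definition compS (S : {ffun 'I_m -> bool}) : {ffun 'I_m -> bool} := [ffun i => ~~ S i].

Definition injm (B : 'M[R]_(m, d)) := forall z : 'cV[R]_d, B *m z = 0 -> z = 0.

Lemma complement_prop S : phase_retrieval A -> injm (sel S) \/ injm (sel (compS S)).
Proof.
move=> PR.
have [H1|H1] := pselect (injm (sel S)); first by left.
have [H2|H2] := pselect (injm (sel (compS S))); first by right.
exfalso.
move/existsNP: H1 => [u /not_implyP [Su u0]].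
move/existsNP: H2 => [v /not_implyP [Sv v0]].
have Hu i : S i -> (A *m u) i 0 = 0.
  by move=> Si; have := congr1 (fun M : 'cV[R]_m => M i 0) Su; rewrite /= selE Si mul1r => ->; rewrite mxE.
have Hv i : ~~ S i -> (A *m v) i 0 = 0.
  by move=> Si; have := congr1 (fun M : 'cV[R]_m => M i 0) Sv; rewrite /= selE ffunE Si mul1r => ->; rewrite mxE.
have : absv (A *m (u + v)) = absv (A *m (u - v)).
  have E1 i : (A *m (u + v)) i 0 = (A *m u) i 0 + (A *m v) i 0 by rewrite mulmxDr mxE.
  have E2 i : (A *m (u - v)) i 0 = (A *m u) i 0 - (A *m v) i 0 by rewrite mulmxBr !mxE.
  apply/matrixP => i j; rewrite /absv [LHS]mxE [RHS]mxE E1 E2.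
  case Si: (S i); last by rewrite (Hv i (negbT Si)) oppr0 !addr0.
  by rewrite (Hu i Si) !add0r normrN.
case/PR => [E|E].
  apply: v0; have H : (u + v) - (u - v) = v + v by rewrite opprB addrC addrA subrK.
  rewrite E subrr in H; move: H => /esym.
  by rewrite -mulr2n -scaler_nat => /eqP; rewrite scaler_eq0 pnatr_eq0 /= => /eqP.
apply: u0; have H : (u + v) + (u - v) = u + u by rewrite addrACA subrr addr0.
rewrite E addNr in H; move: H => /esym.
by rewrite -mulr2n -scaler_nat => /eqP; rewrite scaler_eq0 pnatr_eq0 /= => /eqP.
Qed.


Lemma sqr_absdiff (u v : R) :
  (`|u| - `|v|) ^+ 2 = if (u - v) ^+ 2 <= (u + v) ^+ 2 then (u - v) ^+ 2 else (u + v) ^+ 2.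
Proof.
have Hn : `|u| * `|v| = `|u * v| by rewrite normrM.
have E : (`|u| - `|v|) ^+ 2 = u ^+ 2 + v ^+ 2 - 2 * `|u * v|.
  by rewrite -Hn sqrrB !real_normK ?num_real //; ring.
rewrite E; case: ifP => H.
  have uv : 0 <= u * v by nra.
  by rewrite ger0_norm //; ring.
have uv : u * v < 0 by move/negbT: H; rewrite -ltNge => H; nra.
by rewrite ltr0_norm //; ring.
Qed.

Lemma lower_lip : phase_retrieval A -> exists2 C, 0 < C & forall x y : 'cV[R]_d,
  exists c : R, (c = 1 \/ c = -1) /\ enorm (x - c *: y) <= C * enorm (absv (A *m x) - absv (A *m y)).
Proof.
move=> PR.
have : forall S, exists k : R, 0 <= k /\ (injm (sel S) -> forall z, enorm z <= k * enorm (sel S *m z)).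
  move=> S; have [H|H] := pselect (injm (sel S)).
    by have [k k0 Hk] := inj_lbound H; exists k.
  by exists 0; split => // /H.
case/choice => kf Hkf.
pose C := 1 + \sum_S kf S.
have kC S : kf S <= C.
  rewrite /C (bigD1 S) //= addrCA ler_wpDr // addr_ge0 // sumr_ge0 // => T _.
  by case: (Hkf T).
have C0 : 0 < C by rewrite /C ltr_wpDr // sumr_ge0 // => T _; case: (Hkf T).
exists C => // x y.
pose S : {ffun 'I_m -> bool} := [ffun i => ((A *m x) i 0 - (A *m y) i 0) ^+ 2 <= ((A *m x) i 0 + (A *m y) i 0) ^+ 2].
set E := enorm _.
have E0 : 0 <= E by exact: enorm_ge0.
have Eterm i : (absv (A *m x) - absv (A *m y)) i 0 ^+ 2 = (`|(A *m x) i 0| - `|(A *m y) i 0|) ^+ 2.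
  by rewrite !mxE.
have H1 : enorm (sel S *m (x - y)) <= E.
  apply: enorm_le_sq; rewrite !enorm2s; apply: ler_sum => i _.
  have HB : (A *m (x - y)) i 0 = (A *m x) i 0 - (A *m y) i 0 by rewrite mulmxBr !mxE.
  rewrite Eterm sqr_absdiff selE HB ffunE.
  by case: ifP => _; rewrite ?mul1r ?mul0r ?expr0n ?sqr_ge0.
have H2 : enorm (sel (compS S) *m (x + y)) <= E.
  apply: enorm_le_sq; rewrite !enorm2s; apply: ler_sum => i _.
  have HB : (A *m (x + y)) i 0 = (A *m x) i 0 + (A *m y) i 0 by rewrite mulmxDr !mxE.
  rewrite Eterm sqr_absdiff selE HB !ffunE.
  by case: ifP => _; rewrite /= ?mul1r ?mul0r ?expr0n ?sqr_ge0.
case: (complement_prop S PR) => Hi.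
  exists 1; split; first by left.
  rewrite scale1r; apply: le_trans (proj2 (Hkf S) Hi _) _.
  by apply: ler_pM; [case: (Hkf S) | exact: enorm_ge0 | exact: kC | exact: H1].
exists (-1); split; first by right.
rewrite scaleN1r opprK; apply: le_trans (proj2 (Hkf (compS S)) Hi _) _.
by apply: ler_pM; [case: (Hkf (compS S)) | exact: enorm_ge0 | exact: kC | exact: H2].
Qed.

End PR2.


Section Proj.
Variables (R : realType) (n : nat).
Implicit Types (C : set 'cV[R]_n) (b q z : 'cV[R]_n).

Lemma var_ineq C b q z : convex_set C -> nearest C b q -> C z -> dot (b - q) (z - q) <= 0.
Proof.
move=> cC [Cq Hq] Cz.
set r := b - q; set w := z - q.
set a := dot r w; set N := dot w w.
have N0 : 0 <= N := dot_ge0 w.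
rewrite leNgt; apply/negP => a0.
pose t := Num.min 1 (a / (N + 1)).
have N1 : 0 < N + 1 by lra.
have t0 : 0 < t by rewrite lt_min ltr01 divr_gt0.
have t1 : t <= 1 by rewrite ge_min lexx.
have t2 : t <= a / (N + 1) by rewrite ge_min lexx orbT.
have Ht : 0 <= t <= 1 by rewrite (ltW t0) t1.
have := Hq _ (cC z q t Cz Cq Ht); rewrite -/r.
have -> : b - (t *: z + (1 - t) *: q) = r - t *: w.
  by apply/matrixP => i j; rewrite !mxE; ring.
rewrite -(@ler_pXn2r _ 2) ?nnegrE ?enorm_ge0 //.
clearbody r w; rewrite !enorm2 !(dotBl, dotBr, dotZl, dotZr) (dotC w r) -/a -/N => H.
have H2 : 2 * a <= t * N.
  have : t * (2 * a - t * N) <= 0 by lra.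
  by rewrite pmulr_rle0 // subr_le0.
have H3 : t * N <= a.
  apply: le_trans (ler_wpM2r N0 t2) _.
  rewrite mulrAC ler_pdivrMr // ler_wpM2l //; [exact: ltW | lra].
lra.
Qed.

Lemma proj_lip C b b' q q' : convex_set C -> nearest C b q -> nearest C b' q' ->
  enorm (q - q') <= enorm (b - b').
Proof.
move=> cC Nq Nq'.
have h1 := var_ineq cC Nq (proj1 Nq').
have h2 := var_ineq cC Nq' (proj1 Nq).
have E1 : q' - q = - (q - q') by rewrite opprB.
rewrite E1 dotC dotNl oppr_le0 dotC in h1.
have E2 : b' - q' = (b - q) + ((q - q') - (b - b')) by apply/matrixP => i j; rewrite !mxE; ring.
rewrite E2 dotDl (dotBl (q - q')) in h2.
have h3 : dot (q - q') (q - q') <= dot (b - b') (q - q') by lra.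
have := le_trans h3 (CS _ _).
rewrite -enorm2 expr2.
have [->|qn] := eqVneq (enorm (q - q')) 0; first by rewrite enorm_ge0.
have qp : 0 < enorm (q - q') by rewrite lt_neqAle eq_sym qn enorm_ge0.
by rewrite ler_pM2r.
Qed.
End Proj.


Section Compact.
Variables (R : realType) (n : nat).

Lemma lip_cont (f : 'rV[R]_n -> R) (K : R) : 0 <= K ->
  (forall x y, `|f x - f y| <= K * `|x - y|) -> continuous f.
Proof.
move=> K0 Hf x; apply/(@cvgrPdist_lt _ _ _ (nbhs x) (nbhs_filter x)) => e e0.
have eK : 0 < e / (K + 1) by rewrite divr_gt0 // ltr_wpDl.
near=> y.
apply: le_lt_trans (Hf x y) _.
have : `|x - y| < e / (K + 1).
  near: y; exact: (@cvgr_dist_lt _ _ _ (nbhs x) (nbhs_filter x) id x cvg_id _ eK).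
rewrite ltr_pdivlMr ?ltr_wpDl // => H.
apply: (@le_lt_trans _ _ (K * `|x - y| + `|x - y|)); first by rewrite lerDl normr_ge0.
by rewrite -[X in _ + X]mul1r -mulrDl mulrC.
Unshelve. all: by end_near.
Qed.


Lemma mxn_entry (r : 'rV[R]_n) j : `|r 0 j| <= `|r|.
Proof.
rewrite [leRHS]/Num.norm /= mx_normrE; apply/bigmax_geP; right => /=.
by exists (ord0, j).
Qed.

Lemma mxn_enorm (r : 'rV[R]_n) : `|r| <= enorm r^T.
Proof.
rewrite [leLHS]/Num.norm /= mx_normrE; apply: bigmax_le; first exact: enorm_ge0.
move=> [i j] _ /=; rewrite (ord1 i).
rewrite -(@ler_pXn2r _ 2) ?nnegrE ?enorm_ge0 ?normr_ge0 // enorm2s real_normK ?num_real //.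
rewrite (bigD1 j) //= mxE ler_wpDr // sumr_ge0 // => k _; exact: sqr_ge0.
Qed.

Lemma enorm_mxn (r : 'rV[R]_n) : enorm r^T <= n%:R * `|r|.
Proof.
rewrite -(@ler_pXn2r _ 2) ?nnegrE ?enorm_ge0 ?mulr_ge0 ?normr_ge0 // enorm2s.
apply: (@le_trans _ _ (\sum_(i < n) `|r|^+2)).
  apply: ler_sum => i _; rewrite mxE -real_normK ?num_real //.
  by rewrite ler_pXn2r ?nnegrE ?normr_ge0 ?mxn_entry.
rewrite sumr_const card_ord exprMn -[X in X <= _]mulr_natl ler_wpM2r ?sqr_ge0 //.
rewrite -natrX ler_nat; case: n => [|k] //.
by rewrite expnS expn1 leq_pmulr.
Qed.

Lemma enorm_rev k (u v : 'cV[R]_k) : `|enorm u - enorm v| <= enorm (u - v).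
Proof.
rewrite ler_norml; apply/andP; split.
  have := enorm_triangle (v - u) u; rewrite subrK enormB; lra.
have := enorm_triangle (u - v) v; rewrite subrK; lra.
Qed.


Lemma lin_lip k (B : 'M[R]_(k, n)) (r r' : 'rV[R]_n) :
  enorm (B *m r^T - B *m r'^T) <= frob B * n%:R * `|r - r'|.
Proof.
have -> : B *m r^T - B *m r'^T = B *m (r - r')^T.
  by rewrite -mulmxBr; congr (_ *m _); apply/matrixP => i j; rewrite !mxE.
apply: le_trans (enorm_mul _ _) _.
by rewrite -mulrA ler_wpM2l ?sqrtr_ge0 // enorm_mxn.
Qed.

Lemma exists_min k (B : 'M[R]_(k, n)) (b : 'cV[R]_k) (c : R) :
  0 <= c -> (forall z : 'cV[R]_n, enorm z <= c * enorm (B *m z)) ->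
  exists2 x : 'cV[R]_n, (forall i, 0 <= (B *m x) i 0) &
    forall y : 'cV[R]_n, (forall i, 0 <= (B *m y) i 0) ->
      enorm (b - B *m x) <= enorm (b - B *m y).
Proof.
move=> c0 Hc.
set M := 2 * c * enorm b.
have M0 : 0 <= M by rewrite mulr_ge0 ?mulr_ge0 ?enorm_ge0.
pose X := (\bigcap_(i in [set: 'I_k]) [set r : 'rV[R]_n | 0 <= (B *m r^T) i 0]) `&`
          [set r : 'rV[R]_n | `|r| <= M].
pose f (r : 'rV[R]_n) := enorm (b - B *m r^T).
have fc : continuous f.
  apply: (@lip_cont _ (frob B * n%:R)); first by rewrite mulr_ge0 ?sqrtr_ge0.
  move=> r r'; apply: le_trans (enorm_rev _ _) _.
  have -> : b - B *m r^T - (b - B *m r'^T) = B *m r'^T - B *m r^T.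
    by apply/matrixP => i j; rewrite !mxE; ring.
  by rewrite distrC lin_lip.
have X0 : X !=set0.
  exists 0; split; last by rewrite /= normr0.
  by move=> i _ /=; rewrite trmx0 mulmx0 mxE.
have Xc : compact X.
  apply: bounded_closed_compact.
    exists M; split; first exact: num_real.
    move=> M' HM' r [_ /= Hr]; exact: le_trans Hr (ltW HM').
  apply: closedI.
    apply: closed_bigI => i _.
    have gc : continuous (fun r : 'rV[R]_n => (B *m r^T) i 0).
      apply: (@lip_cont _ (frob B * n%:R)); first by rewrite mulr_ge0 ?sqrtr_ge0.
      move=> r r'; apply: le_trans (lin_lip B r r').
      have -> : (B *m r^T) i 0 - (B *m r'^T) i 0 = (B *m r^T - B *m r'^T) i 0 by rewrite !mxE.
      rewrite -[leLHS]sqrtr_sqr -(@ler_pXn2r _ 2) ?nnegrE ?sqrtr_ge0 ?enorm_ge0 //.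
      rewrite sqr_sqrtr ?sqr_ge0 // enorm2s (bigD1 i) //= ler_wpDr // sumr_ge0 // => j _.
      exact: sqr_ge0.
    exact: (proj1 (continuous_closedP _) gc _ (@closed_ge _ 0)).
  exact: (proj1 (continuous_closedP _) (@norm_continuous _ _) _ (@closed_le _ M)).
have [x0 Xx0 Hmin] := compact_EVT_min X0 Xc (continuous_subspaceT fc).
rewrite inE in Xx0.
exists x0^T; first by move=> i; case: Xx0 => /(_ i I).
have f0 : f x0 <= enorm b.
  have := Hmin 0; rewrite inE /f trmx0 mulmx0 subr0; apply.
  by split; [move=> i _ /=; rewrite trmx0 mulmx0 mxE | rewrite /= normr0].
move=> y Hy.
have [yM|yM] := leP (`|y^T|) M.
  have := Hmin y^T; rewrite inE /f trmxK; apply; split => //.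
  by move=> i _ /=; rewrite trmxK.
apply: le_trans f0 _.
have h1 : M < c * enorm (B *m y).
  apply: lt_le_trans yM (le_trans (mxn_enorm _) _); rewrite trmxK; exact: Hc.
have cp : 0 < c.
  rewrite lt_neqAle c0 andbT; apply/negP => /eqP c00.
  by move: h1; rewrite /M -c00 mulr0 !mul0r ltxx.
have h2 : 2 * enorm b < enorm (B *m y).
  by move: h1; rewrite /M (mulrC 2 c) -mulrA ltr_pM2l.
have := enorm_triangle (b - B *m y) (- b); rewrite addrAC subrr add0r enormN enormN.
lra.
Qed.

End Compact.


Section Cones.
Variables (R : realType) (m d : nat) (A : 'M[R]_(m, d)).

Definition sg (s : {ffun 'I_m -> bool}) i : R := if s i then 1 else -1.
Definition Bs s : 'M[R]_(m, d) := \matrix_(i, j) (sg s i * A i j).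
Definition Cs s (x : 'cV[R]_d) := forall i, 0 <= (Bs s *m x) i 0.
Definition Ks s : set 'cV[R]_m := [set v | exists x, Cs s x /\ v = Bs s *m x].
Definition pat (x : 'cV[R]_d) : {ffun 'I_m -> bool} := [ffun i => 0 <= (A *m x) i 0].

Lemma BsE s (x : 'cV[R]_d) i : (Bs s *m x) i 0 = sg s i * (A *m x) i 0.
Proof. by rewrite !mxE mulr_sumr; apply: eq_bigr => j _; rewrite mxE mulrA. Qed.

Lemma Bs_abs s (x : 'cV[R]_d) : Cs s x -> Bs s *m x = absv (A *m x).
Proof.
move=> H; apply/matrixP => i j; rewrite (ord1 j) [RHS]mxE.
have := H i; rewrite !BsE /sg; case: (s i) => h.
  by rewrite mul1r ger0_norm // -[X in 0 <= X]mul1r.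
by rewrite ler0_norm ?mulN1r //; move: h; rewrite mulN1r oppr_ge0.
Qed.

Lemma Cs_pat x : Cs (pat x) x.
Proof.
move=> i; rewrite BsE /sg ffunE; case: ifP => h; first by rewrite mul1r.
by rewrite mulN1r oppr_ge0 ltW // ltNge h.
Qed.

Lemma Ks_KA s v : Ks s v -> KA A v.
Proof. by case=> x [Hx ->]; exists x; exact: Bs_abs. Qed.

Lemma KA_Ks v : KA A v -> exists s, Ks s v.
Proof. by case=> x ->; exists (pat x); exists x; split; [exact: Cs_pat | rewrite Bs_abs //; exact: Cs_pat]. Qed.

Lemma Ks_convex s : convex_set (Ks s).
Proof.
move=> u v t [x [Hx ->]] [y [Hy ->]] /andP [t0 t1].
exists (t *: x + (1 - t) *: y); split.
  move=> i; have := Hx i; have := Hy i.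
  rewrite mulmxDr -!scalemxAr !mxE => h1 h2.
  by rewrite addr_ge0 // mulr_ge0 // subr_ge0.
by rewrite mulmxDr -!scalemxAr.
Qed.

Lemma enorm_Bs s (x : 'cV[R]_d) : enorm (Bs s *m x) = enorm (A *m x).
Proof.
rewrite /enorm; congr Num.sqrt; apply: eq_bigr => i _.
by rewrite BsE exprMn /sg; case: (s i); rewrite ?sqrrN expr1n mul1r.
Qed.

Lemma A_inj : phase_retrieval A -> forall z : 'cV[R]_d, A *m z = 0 -> z = 0.
Proof.
move=> PR z Hz; have : absv (A *m z) = absv (A *m 0) by rewrite Hz mulmx0.
by case/PR => ->; rewrite ?oppr0.
Qed.

Lemma Ks_exists : phase_retrieval A -> forall s b, exists q, nearest (Ks s) b q.
Proof.
move=> PR s b.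
have [c c0 Hc] := inj_lbound (A_inj PR).
have Hc' : forall z, enorm z <= c * enorm (Bs s *m z) by move=> z; rewrite enorm_Bs.
have [x Hx Hmin] := exists_min b c0 Hc'.
exists (Bs s *m x); split; first by exists x.
by move=> q [y [Hy ->]]; exact: Hmin.
Qed.

End Cones.


Section Sup.
Variables (R : realType) (m : nat).

Lemma enorm_tri3 (a b c : 'cV[R]_m) : enorm (a - c) <= enorm (a - b) + enorm (b - c).
Proof. by have := enorm_triangle (a - b) (b - c); rewrite addrA subrK. Qed.

Lemma seg_sup (g : R -> 'cV[R]_m) (L : R) : 0 <= L ->
  (forall t, 0 <= t <= 1 -> exists2 e, 0 < e & forall u, 0 <= u <= 1 -> `|u - t| < e ->
     enorm (g t - g u) <= `|t - u| * L) ->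
  enorm (g 0 - g 1) <= L.
Proof.
move=> L0 LP.
pose S := [set u : R | 0 <= u <= 1 /\ forall t, 0 <= t <= u -> enorm (g 0 - g t) <= t * L].
have S0 : S 0.
  split; first by rewrite lexx ler01.
  move=> t /andP [t0 t1]; have -> : t = 0 by apply/eqP; rewrite eq_le t1 t0.
  by rewrite subrr enorm0 mul0r.
have Sne : S !=set0 by exists 0.
have Sub : ubound S 1 by move=> u [/andP [_ h] _].
have Shs : has_sup S by split => //; exists 1.
set s := sup S.
have s0 : 0 <= s by apply: sup_upper_bound.
have s1 : s <= 1 by apply: ge_sup.
have HA : forall t, 0 <= t -> t < s -> enorm (g 0 - g t) <= t * L.
  move=> t t0 ts; have [u [_ Hu] tu] := sup_gt Sne ts.
  by apply: Hu; rewrite t0 ltW.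
have s01 : 0 <= s <= 1 by rewrite s0 s1.
have [e e0 He] := LP s s01.
have [u Su ue] : exists2 u, S u & s - e < u.
  by apply: sup_gt => //; rewrite ltrBlDr ltrDl.
have us : u <= s by apply: sup_upper_bound.
have HB : enorm (g 0 - g s) <= s * L.
  case: Su => /andP [u0 u1] Hu.
  apply: le_trans (enorm_tri3 _ (g u) _) _.
  have h1 := Hu u ((_ : 0 <= u <= u)).
  have h2 : enorm (g u - g s) <= `|s - u| * L.
    rewrite -enormN opprB; apply: He; first by rewrite u0 (le_trans us s1).
    by rewrite distrC ger0_norm ?subr_ge0 // ltrBlDr addrC -ltrBlDr.
  rewrite ger0_norm ?subr_ge0 // in h2; lra.
have HC : forall t, s <= t -> t <= 1 -> t < s + e -> enorm (g 0 - g t) <= t * L.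
  move=> t st t1 te.
  apply: le_trans (enorm_tri3 _ (g s) _) _.
  have h2 : enorm (g s - g t) <= `|s - t| * L.
    apply: He; first by rewrite (le_trans s0 st) t1.
    by rewrite ger0_norm ?subr_ge0 // ltrBlDl.
  rewrite distrC ger0_norm ?subr_ge0 // in h2; lra.
pose s' := Num.min 1 (s + e / 2).
have Ss' : S s'.
  split.
    apply/andP; split; last by rewrite /s' ge_min lexx.
    by rewrite /s' le_min ler01 addr_ge0 // divr_ge0 // ltW.
  move=> t /andP [t0 ts'].
  have [ts|st] := ltP t s; first exact: HA.
  apply: HC => //; first by apply: le_trans ts' _; rewrite ge_min lexx.
  apply: le_lt_trans ts' _; rewrite gt_min; apply/orP; right; lra.
have s's : s' <= s by apply: sup_upper_bound.
have s_1 : s = 1.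
  apply/eqP; rewrite eq_le s1 /=; rewrite leNgt; apply/negP => sl1.
  move: s's; rewrite /s' ge_min => /orP [|]; first by rewrite leNgt sl1.
  lra.
by move: HB; rewrite s_1 mul1r.
Qed.

Lemma fin_delta (I : finType) (P : I -> R -> Prop) :
  (forall i, exists2 e, 0 < e & P i e) ->
  (forall i e e', 0 < e' <= e -> P i e -> P i e') ->
  exists2 e, 0 < e & forall i, P i e.
Proof.
move=> H Hmon; have /choice [ef Hef] : forall i, exists e, 0 < e /\ P i e.
  by move=> i; have [e e0 He] := H i; exists e.
exists (\big[Num.min/1]_i ef i).
  by elim/big_ind: _ => //= [x y x0 y0|i _]; [rewrite lt_min x0 y0 | case: (Hef i)].
move=> i; apply: (Hmon i (ef i)); last by case: (Hef i).
apply/andP; split.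
  by elim/big_ind: _ => //= [x y x0 y0|j _]; [rewrite lt_min x0 y0 | case: (Hef j)].
by rewrite (bigD1 i) //= ge_min lexx.
Qed.

End Sup.


Section Seg.
Variables (R : realType) (m d : nat) (A : 'M[R]_(m, d)).

Lemma seg_lip : phase_retrieval A -> forall b b' : 'cV[R]_m,
  (forall t, 0 <= t <= 1 -> UA A (t *: b' + (1 - t) *: b)) ->
  forall p p', nearest (KA A) b p -> nearest (KA A) b' p' -> enorm (p - p') <= enorm (b - b').
Proof.
move=> PR b b' HU p p' Np Np'.
pose bt t : 'cV[R]_m := t *: b' + (1 - t) *: b.
set L := enorm (b - b').
have L0 : 0 <= L by exact: enorm_ge0.
have bdist t u : enorm (bt t - bt u) = `|t - u| * L.
  have -> : bt t - bt u = (t - u) *: (b' - b) by apply/matrixP => i j; rewrite !mxE; ring.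
  by rewrite enormZ enormB.
have /choice [g Hg] : forall t, exists p, 0 <= t <= 1 -> nearest (KA A) (bt t) p.
  move=> t; have [H|H] := pselect (0 <= t <= 1).
    by have [q [Hq _]] := HU t H; exists q.
  by exists 0.
have uniq t q : 0 <= t <= 1 -> nearest (KA A) (bt t) q -> q = g t.
  move=> H Hq; have [q0 [_ Hu]] := HU t H.
  by rewrite (Hu q Hq) (Hu (g t) (Hg t H)).
have /choice [qf Hqf] : forall sb : {ffun 'I_m -> bool} * 'cV[R]_m,
    exists q, nearest (Ks A sb.1) sb.2 q.
  by move=> [s c]; exact: Ks_exists.
pose dK s t := enorm (bt t - qf (s, bt t)).
pose D t := enorm (bt t - g t).
have Da t s : 0 <= t <= 1 -> D t <= dK s t.
  by move=> H; apply: (proj2 (Hg t H)); apply: Ks_KA; exact: (proj1 (Hqf (s, bt t))).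
have Lipd s t u : dK s t <= dK s u + `|t - u| * L.
  apply: le_trans (proj2 (Hqf (s, bt t)) _ (proj1 (Hqf (s, bt u)))) _.
  by apply: le_trans (enorm_tri3 _ (bt u) _) _; rewrite bdist addrC /dK /D lexx.
have LipD t u : 0 <= t <= 1 -> 0 <= u <= 1 -> D t <= D u + `|t - u| * L.
  move=> Ht Hu.
  apply: le_trans (proj2 (Hg t Ht) _ (proj1 (Hg u Hu))) _.
  by apply: le_trans (enorm_tri3 _ (bt u) _) _; rewrite bdist addrC /dK /D lexx.
have Hs t : 0 <= t <= 1 -> exists s, Ks A s (g t).
  by move=> H; apply: KA_Ks; exact: (proj1 (Hg t H)).
have near_Ks t s : 0 <= t <= 1 -> Ks A s (g t) -> nearest (Ks A s) (bt t) (g t).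
  move=> H Kg; split => // q Kq; apply: (proj2 (Hg t H)); exact: Ks_KA Kq.
have eqD t s : 0 <= t <= 1 -> Ks A s (g t) -> dK s t = D t.
  move=> H Kg; apply/eqP; rewrite eq_le Da // andbT.
  exact: (proj2 (Hqf (s, bt t)) _ Kg).
have cK t s : 0 <= t <= 1 -> dK s t = D t -> qf (s, bt t) = g t.
  move=> H E; apply: uniq => //; split.
    by apply: Ks_KA; exact: (proj1 (Hqf (s, bt t))).
  by move=> q Kq; rewrite -/(dK s t) E; exact: (proj2 (Hg t H)).
have key : enorm (g 0 - g 1) <= L.
  apply: seg_sup => // t Ht.
  have [e e0 He] : exists2 e, 0 < e & forall s, D t < dK s t ->
      forall u, 0 <= u <= 1 -> `|u - t| < e -> D u < dK s u.
    apply: (@fin_delta _ _ (fun s e => D t < dK s t ->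
      forall u, 0 <= u <= 1 -> `|u - t| < e -> D u < dK s u)).
  - move=> s; have [gap|ngap] := ltP (D t) (dK s t); last first.
      by exists 1 => // /(lt_le_trans ngap); rewrite ltxx.
    exists ((dK s t - D t) / (2 * L + 1)).
      by rewrite divr_gt0 ?subr_gt0 //; lra.
    move=> _ u Hu ue.
    have h1 := Lipd s t u.
    have h2 := LipD u t Hu Ht.
    have x0 : 0 <= `|u - t| by exact: normr_ge0.
    move: ue; rewrite ltr_pdivlMr; last by lra.
    rewrite distrC in h1 => ue.
    nra.
  - move=> s e1 e2 /andP [e20 e21] H gap u Hu ue.
    by apply: H => //; apply: lt_le_trans ue e21.
  exists e => // u Hu ue.
  have [s Ksu] := Hs u Hu.
  have equ := eqD u s Hu Ksu.
  have eqt : dK s t = D t.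
    apply/eqP; rewrite eq_le Da // andbT leNgt; apply/negP => gap.
    by have := He s gap u Hu ue; rewrite equ ltxx.
  have qe := cK t s Ht eqt.
  have Nt : nearest (Ks A s) (bt t) (g t) by rewrite -qe; exact: (Hqf (s, bt t)).
  have Nu := near_Ks u s Hu Ksu.
  by have := proj_lip (@Ks_convex _ _ _ A s) Nt Nu; rewrite bdist.
have b0 : bt 0 = b by rewrite /bt scale0r add0r subr0 scale1r.
have b1 : bt 1 = b' by rewrite /bt scale1r subrr scale0r addr0.
have gp : p = g 0 by apply: uniq; [rewrite lexx ler01 | rewrite b0].
have gp' : p' = g 1 by apply: uniq; [rewrite lexx ler01 | rewrite b1].
by rewrite gp gp'.
Qed.

End Seg.


Unset Implicit Arguments.

Lemma nearest_Phi {R : realType} {m d : nat} {A : 'M[R]_(m, d)} {b p : 'cV[R]_m} :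
  nearest (KA A) b p -> exists2 x, PhiA A b x & p = absv (A *m x).
Proof.
move=> [[x ->] Hp]; exists x => //.
move=> z; rewrite ler_pXn2r ?nnegrE ?enorm_ge0 // enormB [X in _ <= X]enormB.
by apply: Hp; exists z.
Qed.

Theorem theorem5p5 (R : realType) (m d : nat) (A : 'M[R]_(m, d)) :
  phase_retrieval A ->
  exists2 alpha : R, 0 < alpha &
    forall Omega : set 'cV[R]_m,
      convex_domain Omega -> Omega `<=` UA A ->
      forall b b' : 'cV[R]_m, Omega b -> Omega b' ->
        alpha * distPhi A b b' <= enorm (b - b').
Proof.
move=> PR; have [C C0 HC] := lower_lip PR.
exists C^-1; first by rewrite invr_gt0.
move=> Om [_ _ cvx] OU b b' Ob Ob'.
have HU : forall t, 0 <= t <= 1 -> UA A (t *: b' + (1 - t) *: b).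
  by move=> t Ht; apply: OU; apply: cvx.
have [p [Np _]] := OU b Ob.
have [p' [Np' _]] := OU b' Ob'.
have Hpp := seg_lip PR HU Np Np'.
have [x Px px] := nearest_Phi Np.
have [y Py py] := nearest_Phi Np'.
have [c [c1 Hc]] := HC x y.
rewrite -px -py in Hc.
have Hd : distPhi A b b' <= enorm (x - c *: y).
  apply: ge_inf; last by exists x, y, c.
  by exists 0 => r [x1 [y1 [c2 [_ _ _ ->]]]]; exact: enorm_ge0.
rewrite -(ler_pM2l C0) mulrA mulfV ?gt_eqF // mul1r.
apply: le_trans Hd _; apply: le_trans Hc _.
by rewrite ler_pM2l.
Qed.
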